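(* There is an absolute constant $c>0$ such that the following holds. Let $G$ be a finite abelian group, let $B \subset G$ be a regular Bohr set and let $A \subset B$ be a set of relative density $\alpha> 0$. Let $\lambda \in [0,1]$, and suppose $T \subset B_\tau$ is nonempty, where $\tau \le c\lambda^2/\mathrm{rk}(B)$. If \[ \mu_A*1_A*\mu_T*\mu_T(x) \leq (1-2\lambda^2)\alpha \] for some $x \in B_\tau$, then $\|1_A*\mu_T\|_\infty \geq (1+\lambda)\alpha$.
   Context: $f*g(x)=\sum_{y} f(y)g(x-y)$; $1_X$ indicator, $\mu_X=1_X/|X|$; relative density of $A$ in $B$ is $|A|/|B|$; $\|F\|_\infty=\max|F|$. Bohr sets: for $\Gamma\subset\widehat G$, $\rho\ge0$, $\mathrm{Bohr}(\Gamma,\rho)=\{x: |\gamma(x)-1|\le\rho\ \forall\gamma\in\Gamma\}$, with $(\Gamma,\rho)$ part of the data, rank $\mathrm{rk}=|\Gamma|$; $B_\tau=\mathrm{Bohr}(\Gamma,\tau\rho)$. $B$ of rank $d$ is regular if $1-12d|\tau|\le |B_{1+\tau}|/|B|\le 1+12d|\tau|$ for $|\tau|\le 1/(12d)$. *)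

(* Defs.v *)
(* Finite abelian group = finZmodType (additive notation);
   characters take values in algC (algebraic complex numbers). *)
From HB Require Import structures.
From mathcomp Require Import all_boot all_order all_algebra all_field.
Set Implicit Arguments. Unset Strict Implicit. Unset Printing Implicit Defensive.
Import Order.TTheory GRing.Theory Num.Theory.
Local Open Scope ring_scope.

Section Defs.
Variable G : finZmodType.

Definition is_character (g : {ffun G -> algC}) : Prop :=
  g 0 = 1 /\ forall x y : G, g (x + y) = g x * g y.

Definition conv (f g : G -> algC) (x : G) : algC := \sum_(y : G) f y * g (x - y).

Definition ind (X : {set G}) (x : G) : algC := (x \in X)%:R.
Definition mu (X : {set G}) (x : G) : algC := ind X x / #|X|%:R.

Definition sup_norm (F : G -> algC) : algC := \big[Num.max/0]_(x : G) `|F x|.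

Definition rel_density (X Y : {set G}) : algC := #|X|%:R / #|Y|%:R.

Definition Bohr (Gam : seq {ffun G -> algC}) (rho : algC) : {set G} :=
  [set x : G | all (fun g : {ffun G -> algC} => `|g x - 1| <= rho) Gam].

Definition rk (Gam : seq {ffun G -> algC}) : nat := size (undup Gam).

Definition regular (Gam : seq {ffun G -> algC}) (rho : algC) : Prop :=
  forall t : algC, t \is Num.real ->
    `|t| <= 1 / (12 * (rk Gam)%:R) ->
    1 - 12 * (rk Gam)%:R * `|t| <= #|Bohr Gam ((1 + t) * rho)|%:R / #|Bohr Gam rho|%:R
    /\ #|Bohr Gam ((1 + t) * rho)|%:R / #|Bohr Gam rho|%:R <= 1 + 12 * (rk Gam)%:R * `|t|.
End Defs.

(* Main.v *)
Require Import Defs.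
From HB Require Import structures.
From mathcomp Require Import all_boot all_order all_algebra all_field.
From mathcomp Require Import all_fingroup ring lra.
From Stdlib Require Import FunctionalExtensionality.
Set Implicit Arguments. Unset Strict Implicit.
Import Order.TTheory GRing.Theory Num.Theory.
Local Open Scope ring_scope.

Section Aux.
Variable G : finZmodType.
Implicit Types (f g h : G -> algC).

Lemma max_ge (x y : algC) : 0 <= x -> 0 <= y ->
  [/\ 0 <= Num.max x y, x <= Num.max x y & y <= Num.max x y].
Proof.
move=> x0 y0; rewrite /Num.max /Order.max.
case: ifP => xy.
  by split => //; rewrite ltW.
have : ~~ (x < y) by rewrite xy.
rewrite -real_leNgt ?ger0_real // => yx.
Qed.

Lemma bigmax_ge (f : G -> algC) : (forall i, 0 <= f i) ->
  0 <= \big[Num.max/0]_i f i /\ forall i, f i <= \big[Num.max/0]_i f i.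
Proof.
move=> f0.
suff H : forall r : seq G, 0 <= \big[Num.max/0]_(i <- r) f i /\
   forall i, i \in r -> f i <= \big[Num.max/0]_(i <- r) f i.
  have [H1 H2] := H (index_enum G); split => // i; apply: H2.
  by rewrite mem_index_enum.
elim=> [|j r [IH1 IH2]]; first by rewrite big_nil.
rewrite big_cons; have [m0 m1 m2] := @max_ge _ _ (f0 j) IH1.
split=> // i; rewrite inE => /orP[/eqP->//|ir].
exact: le_trans (IH2 _ ir) m2.
Qed.

Lemma conv_comm f g : conv f g = conv g f.
Proof.
apply: functional_extensionality => x; rewrite /conv.
rewrite (reindex_inj (can_inj (subKr x))) /=.
by apply: eq_bigr => y _; rewrite subKr mulrC.
Qed.

Lemma conv_assoc f g h : conv (conv f g) h = conv f (conv g h).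
Proof.
apply: functional_extensionality => x; rewrite /conv.
under eq_bigr do rewrite mulr_suml.
rewrite exchange_big /=; apply: eq_bigr => z _.
rewrite mulr_sumr (reindex_inj (addrI z)) /=.
apply: eq_bigr => w _; rewrite addrC addKr mulrA; congr (_ * _).
by congr h; rewrite opprD addrA.
Qed.

Lemma conv_scalel f g (k : algC) x :
  conv (fun y => f y / k) g x = conv f g x / k.
Proof.
rewrite /conv mulr_suml; apply: eq_bigr => y _; by rewrite mulrAC.
Qed.

Lemma sum_ind (X : {set G}) : \sum_z ind X z = #|X|%:R.
Proof.
transitivity (\sum_(z in X) (1:algC)); last by rewrite sumr_const.
rewrite [RHS]big_mkcond /=; apply: eq_bigr => z _; rewrite /ind.
by case: (z \in X).
Qed.

Lemma sum_shift f y : \sum_z f (z - y) = \sum_z f z.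
Proof.
rewrite (reindex_inj (addIr y)) /=; apply: eq_bigr => z _; by rewrite addrK.
Qed.

Lemma ind_ge0 (X : {set G}) z : 0 <= ind X z.
Proof. by rewrite /ind ler0n. Qed.

Lemma mu_ge0 (X : {set G}) z : 0 <= mu X z.
Proof. by rewrite /mu divr_ge0 ?ind_ge0 ?ler0n. Qed.

Lemma conv_ge0 f g x : (forall z, 0 <= f z) -> (forall z, 0 <= g z) -> 0 <= conv f g x.
Proof. by move=> f0 g0; apply: sumr_ge0 => y _; rewrite mulr_ge0. Qed.

Lemma char_norm1 (g : {ffun G -> algC}) : is_character g -> forall y, `|g y| = 1.
Proof.
move=> [g0 gM] y.
have gn : forall n, g (y *+ n) = g y ^+ n.
  elim=> [|n IH]; first by rewrite mulr0n expr0.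
  by rewrite mulrS gM IH exprS.
have : y *+ #[y]%g = 0.
  by have := expg_order y; rewrite FinRing.zmodXgE.
move=> h; have : `|g y| ^+ #[y]%g = 1 by rewrite -normrX -gn h g0 normr1.
move/eqP; rewrite pexpr_eq1 ?normr_ge0 //; first by move/eqP.

Qed.


Section BohrLemmas.
Variable Gam : seq {ffun G -> algC}.
Hypothesis Hch : forall g : {ffun G -> algC}, g \in Gam -> is_character g.

Lemma bohr_add r1 r2 y z : y \in Bohr Gam r1 -> z \in Bohr Gam r2 ->
  y + z \in Bohr Gam (r1 + r2).
Proof.
rewrite !inE => /allP H1 /allP H2; apply/allP => g gG /=.
have [g0 gM] := Hch gG.
have e : g (y + z) - 1 = g y * (g z - 1) + (g y - 1) by rewrite gM; ring.
rewrite e; apply: le_trans (ler_normD _ _) _.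
rewrite normrM char_norm1 // mul1r addrC; apply: lerD; [exact: H1|exact: H2].
Qed.

Lemma bohr_neg r y : y \in Bohr Gam r -> - y \in Bohr Gam r.
Proof.
rewrite !inE => /allP H1; apply/allP => g gG /=.
have [g0 gM] := Hch gG.
have e : g (- y) - 1 = g (- y) * (1 - g y).
  by rewrite mulrBr -gM addNr g0 mulr1.
by rewrite e normrM char_norm1 // mul1r distrC; exact: H1.
Qed.

Lemma bohr_mono r1 r2 y : r1 <= r2 -> y \in Bohr Gam r1 -> y \in Bohr Gam r2.
Proof.
move=> r12; rewrite !inE => /allP H1; apply/allP => g gG /=.
exact: le_trans (H1 _ gG) r12.
Qed.

End BohrLemmas.

Lemma bohr_nil r : Bohr [::] r = [set: G].
Proof. by apply/setP => z; rewrite !inE. Qed.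

End Aux.
Lemma num_lemma (R : realFieldType) (a b b' s M X lam E : R) :
  0 < a -> 0 < b -> 0 <= lam -> lam <= 1 -> 0 <= E -> 20 * E <= lam ^+ 2 ->
  b <= s -> b' <= (1 + E) * b -> 0 <= M -> a <= M * b' -> M * b < (1 + lam) * a ->
  2 * M * (a - M * (b' - s)) - M ^+ 2 * s <= X ->
  X * b <= (1 - 2 * lam ^+ 2) * a ^+ 2 -> False.
Proof.
move=> a0 b0 l0 l1 E0 El bs bb' M0 aM Mb hX hXb.
have hM2 : 0 <= M ^+ 2 * b by rewrite mulr_ge0 // ?sqr_ge0 // ltW.
have h1 : 2 * M * a * b - M ^+ 2 * b ^+ 2 * (1 + 2 * E) <= X * b.
  have : (2 * M * (a - M * (b' - s)) - M ^+ 2 * s) * b <= X * b by rewrite ler_pM2r.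
  apply: le_trans.
  have e1 : M ^+ 2 * b * b' <= M ^+ 2 * b * ((1 + E) * b) by rewrite ler_wpM2l.
  have e2 : M ^+ 2 * b * b <= M ^+ 2 * b * s by rewrite ler_wpM2l.
  nra.
set u := M * b.
have hu1 : u < (1 + lam) * a by [].
have hu2 : a <= u * (1 + E).
  have : M * b' <= M * ((1 + E) * b) by rewrite ler_wpM2l.
  rewrite /u; nra.
have h2 : 2 * u * a - u ^+ 2 * (1 + 2 * E) <= (1 - 2 * lam ^+ 2) * a ^+ 2.
  apply: le_trans hXb; apply: le_trans h1; rewrite /u; nra.
set d := u - a.
have hd1 : d < lam * a by rewrite /d; lra.
have hd2 : - (E * a) <= d.
  rewrite /d. nra.
have hud : u = a + d by rewrite /d; ring.
rewrite hud in h2.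
have [lz|lp] := eqVneq lam 0.
  move: El; rewrite lz expr0n /= => El.
  have E00 : E = 0 by lra.
  rewrite E00 lz in hd2 hd1; rewrite mul0r in hd1; rewrite mul0r oppr0 in hd2; lra.
have lp' : 0 < lam by rewrite lt_def lp.
have hEl : E * a < lam * a.
  rewrite ltr_pM2r //; nra.
have hd3 : d ^+ 2 < lam ^+ 2 * a ^+ 2.
  have : `|d| < lam * a.
    rewrite ltr_norml; apply/andP; split; lra.
  move=> h; have h0 : 0 <= `|d| by [].
  rewrite -real_normK ?num_real //; nra.
have la : lam * a <= a by rewrite ler_piMl // ltW.
have had : 0 <= a + d by lra.
have had2 : a + d <= 2 * a by lra.
have had3 : (a + d) ^+ 2 <= 4 * a ^+ 2 by nra.
have : 2 * E * (a + d) ^+ 2 <= 2 * E * (4 * a ^+ 2) by apply: ler_wpM2l; lra.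
nra.
Qed.
Lemma num_lemmaC (a b b' s M X lam E : algC) :
  a \is Creal -> b \is Creal -> b' \is Creal -> s \is Creal -> M \is Creal ->
  X \is Creal -> lam \is Creal -> E \is Creal ->
  0 < a -> 0 < b -> 0 <= lam -> lam <= 1 -> 0 <= E -> 20 * E <= lam ^+ 2 ->
  b <= s -> b' <= (1 + E) * b -> 0 <= M -> a <= M * b' -> M * b < (1 + lam) * a ->
  2 * M * (a - M * (b' - s)) - M ^+ 2 * s <= X ->
  X * b <= (1 - 2 * lam ^+ 2) * a ^+ 2 -> False.
Proof.
move=> ra rb rb' rs rM rX rl rE.
have hE : forall p q : algR, ((p <= q) = (algRval p <= algRval q)) * ((p < q) = (algRval p < algRval q)) by [].
move=> *; apply: (@num_lemma _ (in_algR ra) (in_algR rb) (in_algR rb') (in_algR rs) (in_algR rM) (in_algR rX) (in_algR rl) (in_algR rE));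
  rewrite !hE /= ?(rmorphB, rmorphM, rmorphD, rmorphX, rmorph1, rmorph0, rmorphN, rmorph_nat) //=.
Qed.

Theorem lemma10 : exists c : algC, 0 < c /\
  forall (G : finZmodType) (Gam : seq {ffun G -> algC}) (rho : algC)
         (A T : {set G}) (lam tau : algC) (x : G),
    (forall g, g \in Gam -> is_character g) ->
    0 <= rho ->
    regular Gam rho ->
    A \subset Bohr Gam rho ->
    0 < rel_density A (Bohr Gam rho) ->
    0 <= lam -> lam <= 1 ->
    0 <= tau -> tau * (rk Gam)%:R <= c * lam ^+ 2 ->
    T != set0 -> T \subset Bohr Gam (tau * rho) ->
    x \in Bohr Gam (tau * rho) ->
    conv (conv (conv (mu A) (ind A)) (mu T)) (mu T) x
      <= (1 - 2 * lam ^+ 2) * rel_density A (Bohr Gam rho) ->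
    (1 + lam) * rel_density A (Bohr Gam rho) <= sup_norm (conv (ind A) (mu T)).
Proof.
exists (1 / 240%:R); split; first by rewrite divr_gt0 ?ltr0n.
move=> G Gam rho A T lam tau x Hch rho0 Hreg AB Hdens l0 l1 t0 Htau Tn0 TB xB Hq.
set B := Bohr Gam rho in AB Hdens Hq *.
set B' := Bohr Gam ((1 + tau) * rho).
set F := conv (ind A) (mu T).
set M := sup_norm F.
have T0 : 0 < #|T|%:R :> algC by rewrite ltr0n card_gt0.
have b0 : 0 < #|B|%:R :> algC.
  rewrite ltr0n lt0n; apply/eqP => h.
  by move: Hdens; rewrite /rel_density h mulr0n invr0 mulr0 ltxx.
have a0 : 0 < #|A|%:R :> algC.
  rewrite ltr0n lt0n; apply/eqP => h.
  by move: Hdens; rewrite /rel_density h mulr0n mul0r ltxx.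
have Fge0 : forall z, 0 <= F z by move=> z; apply: conv_ge0 => y; [exact: ind_ge0|exact: mu_ge0].
have Fsupp : forall z, z \notin B' -> F z = 0.
  move=> z zB; rewrite /F /conv; apply: big1 => y _; rewrite /mu /ind.
  case yA: (y \in A); last by rewrite mul0r.
  case yT: (z - y \in T); last by rewrite mul0r mulr0.
  exfalso; move/negP: zB; apply.
  have := bohr_add Hch (subsetP AB _ yA) (subsetP TB _ yT).
  by rewrite (addrC y) subrK /B'; have -> : rho + tau * rho = (1 + tau) * rho by ring.
have sumMu : \sum_z mu T z = 1.
  by rewrite /mu -mulr_suml sum_ind divff // gt_eqF.
have sumF : \sum_z F z = #|A|%:R.
  rewrite /F /conv exchange_big /=.
  under eq_bigr do rewrite -mulr_sumr sum_shift sumMu mulr1.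
  exact: sum_ind.
have [M0 HM] : 0 <= M /\ forall z, F z <= M.
  have [h1 h2] := @bigmax_ge _ (fun z => `|F z|) (fun z => normr_ge0 _).
  split=> // z; rewrite -(ger0_norm (Fge0 z)); exact: h2.
have QX : conv (conv (conv (mu A) (ind A)) (mu T)) (mu T) x =
          (\sum_z F z * F (x - z)) / #|A|%:R.
  rewrite conv_assoc conv_assoc -(conv_assoc (ind A)) -/F conv_comm.
  rewrite conv_assoc (conv_comm (mu T) (mu A)).
  have -> : conv (mu A) (mu T) = fun y => F y / #|A|%:R.
    by apply: functional_extensionality => y; exact: conv_scalel.
  by rewrite conv_comm conv_scalel.
set S := [set z | (z \in B') && (x - z \in B')].
have SB' : S \subset B' by apply/subsetP => z; rewrite inE => /andP[].
have P1 : forall z, ind S z * (M * F z + M * F (x - z) - M ^+ 2) <= F z * F (x - z).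
  move=> z; rewrite /ind; case: (z \in S); last by rewrite mul0r mulr_ge0.
  rewrite mul1r.
  have h1 : 0 <= M - F z by rewrite subr_ge0.
  have h2 : 0 <= M - F (x - z) by rewrite subr_ge0.
  rewrite -subr_ge0.
  have -> : F z * F (x - z) - (M * F z + M * F (x - z) - M ^+ 2)
     = (M - F z) * (M - F (x - z)) by ring.
  exact: mulr_ge0 h1 h2.
have P2 : \sum_z ind S z * F (x - z) = \sum_z ind S z * F z.
  rewrite (reindex_inj (can_inj (subKr x))) /=; apply: eq_bigr => z _.
  by rewrite subKr /ind !inE subKr andbC.
have P3 : forall z, F z <= ind S z * F z + M * (ind B' z - ind S z).
  move=> z; rewrite /ind; case zS: (z \in S).
    by rewrite (subsetP SB' _ zS) mul1r subrr mulr0 addr0.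
  rewrite mul0r add0r subr0; case zB: (z \in B'); first by rewrite mulr1.
  by rewrite Fsupp ?zB // mulr0.
have P4 : forall z, F z <= M * ind B' z.
  move=> z; rewrite /ind; case zB: (z \in B'); first by rewrite mulr1.
  by rewrite Fsupp ?zB // mulr0.
have bs : (#|B| <= #|S|)%N.
  have sub : [set x - z | z in B] \subset S.
    apply/subsetP => w /imsetP [z zB ->]; rewrite inE subKr.
    apply/andP; split.
      have := bohr_add Hch xB (bohr_neg Hch zB).
      by rewrite /B'; have -> : tau * rho + rho = (1 + tau) * rho by ring.
    apply: bohr_mono zB; rewrite mulrDl mul1r lerDl; exact: mulr_ge0.
  by have := subset_leq_card sub; rewrite card_imset //; exact: (can_inj (subKr x)).
set d : algC := (rk Gam)%:R.
have d0 : 0 <= d by rewrite ler0n.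
have l21 : lam ^+ 2 <= 1 by rewrite exprn_ile1.
have c0 : 0 <= 1 / 240%:R :> algC by rewrite divr_ge0 ?ler0n.
have Htau' : tau * d <= 1 / 240%:R.
  apply: le_trans Htau _; rewrite -[X in _ <= X]mulr1; exact: ler_wpM2l.
set E := 12%:R * d * tau.
have E0 : 0 <= E by rewrite mulr_ge0 ?mulr_ge0 ?ler0n.
have E20 : 20%:R * E <= lam ^+ 2.
  have -> : 20%:R * E = 240%:R * (tau * d) by rewrite /E; ring.
  apply: le_trans (ler_wpM2l (ler0n _ 240) Htau) _.
  by rewrite mulrA mul1r mulfV ?mul1r // pnatr_eq0.
have hb' : #|B'|%:R <= (1 + E) * #|B|%:R :> algC.
  case: (posnP (rk Gam)) => [dz | dpos].
    have GamE : Gam = [::].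
      move: dz; rewrite /rk; case: (Gam) => //= g l.
      case: ifP => //= gl; move/eqP; rewrite size_eq0 => /eqP ul.
      by move: gl; rewrite -mem_undup ul.
    have -> : E = 0 by rewrite /E /d dz mulr0 mul0r.
    by rewrite addr0 mul1r /B' /B GamE !bohr_nil.
  have dp : 0 < d by rewrite ltr0n.
  have := Hreg tau (ger0_real t0).
  rewrite ger0_norm // ler_pdivlMr; last by rewrite mulr_gt0 ?ltr0n.
  case.
    have : tau * (12%:R * d) = 12%:R * (tau * d) by ring.
    move=> ->; rewrite -ler_pdivlMl ?ltr0n //; apply: le_trans Htau' _.
    by rewrite mulr1 !mul1r lef_pV2 ?posrE ?ltr0n // ler_nat.
  move=> _ h; rewrite -/d -/B' -/B ler_pdivrMr // in h.
set a : algC := #|A|%:R.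
set b : algC := #|B|%:R.
set b'' : algC := #|B'|%:R.
set s : algC := #|S|%:R.
set X := \sum_z F z * F (x - z).
have X0 : 0 <= X by apply: sumr_ge0 => z _; rewrite mulr_ge0.
have haM : a <= M * b''.
  rewrite /a -sumF /b'' -sum_ind mulr_sumr; exact: ler_sum.
have hP : a <= \sum_z ind S z * F z + M * (b'' - s).
  rewrite /a -sumF /b'' /s -!sum_ind -sumrB mulr_sumr -big_split /=.
  by apply: ler_sum => z _; rewrite mulrBr -mulrBr.
have hX : 2%:R * M * (a - M * (b'' - s)) - M ^+ 2 * s <= X.
  apply: le_trans (ler_sum _ (fun z _ => P1 z)).
  have e : forall z, ind S z * (M * F z + M * F (x - z) - M ^+ 2) =
    M * (ind S z * F z) + M * (ind S z * F (x - z)) - M ^+ 2 * ind S z.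
    by move=> z; ring.
  under eq_bigr do rewrite e.
  rewrite sumrB big_split /= -!mulr_sumr P2 sum_ind -/s.
  rewrite lerD2r.
  have -> : M * (\sum_z ind S z * F z) + M * (\sum_z ind S z * F z)
    = 2%:R * M * (\sum_z ind S z * F z) by ring.
  apply: ler_wpM2l; first by rewrite mulr_ge0 ?ler0n.
  by rewrite lerBlDr.
have hbs : b <= s by rewrite /b /s ler_nat.
move: Hq; rewrite QX /rel_density -/a -/b => Hq.
have hXb : X * b <= (1 - 2%:R * lam ^+ 2) * a ^+ 2.
  have ab0 : 0 <= a * b by rewrite mulr_ge0 // ltW.
  have := ler_wpM2r ab0 Hq.
  have e1 : X / a * (a * b) = X * b.
    by field; rewrite gt_eqF.
  have e2 : (1 - 2%:R * lam ^+ 2) * (a / b) * (a * b) = (1 - 2%:R * lam ^+ 2) * a ^+ 2.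
    by field; rewrite gt_eqF.
  by rewrite e1 e2.
rewrite /rel_density -/a -/b real_leNgt ?ger0_real //; last first.
  by rewrite mulr_ge0 ?divr_ge0 ?addr_ge0 // ltW.
apply/negP => hlt.
rewrite mulrA ltr_pdivlMr // in hlt.
apply: (@num_lemmaC a b b'' s M X lam E) => //; try exact: ger0_real.
Qed.
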